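(* Let $1\le s\le n$. Let $\mathcal{N}(n,s)$ be the set of two-colour necklaces of length $n$ with exactly $s$ beads of colour $0$ and $n-s$ beads of colour $1$, and let $\mathcal{E}(n,s)$ be the set of canonical representative increment arrays of size $s$ for $n$ agents. The map sending a necklace to $\Phi(a)$, where $a=a_1\cdots a_n$ is its lexicographically smallest representative string, is a bijection $\mathcal{N}(n,s)\to\mathcal{E}(n,s)$. Here, for a binary string $a$ with $a_1=0$ containing exactly $s$ zeros, written uniquely as $a=0\,1^{t_0}\,0\,1^{t_1}\cdots 0\,1^{t_{s-1}}$ with $t_i\ge 0$, the run-length encoding is $\Phi(a)=\langle t_0,t_1,\ldots,t_{s-1}\rangle$ (so $t_i$ is the number of consecutive $1$s following the $(i+1)$-th $0$, the last count including the trailing $1$s at the end of the string).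
   Context: A two-colour necklace of length $n$ is an equivalence class of binary strings of length $n$ under cyclic rotation; its canonical (lexicographically smallest) representative is the least string in the class under lexicographic order with $0<1$. An increment array (IA) of size $s$ for $n$ agents is a tuple $\underline{t}=\langle t_0,\ldots,t_{s-1}\rangle$ of non-negative integers with $\sum t_i=n-s$. Two IAs of the same size are equivalent if one is a circular shift of the other, i.e.\ $\langle u_0,\ldots,u_{s-1}\rangle=\langle t_k,\ldots,t_{s-1},t_0,\ldots,t_{k-1}\rangle$ for some $0\le k\le s-1$; the canonical representative of an equivalence class is its lexicographically smallest member, and $\mathcal{E}(n,s)$ is the set of these canonical representatives. *)

(* Defs.v *)
From mathcomp Require Import all_boot.
Set Implicit Arguments. Unset Strict Implicit. Unset Printing Implicit Defensive.

(* Binary strings: colour 0 = false, colour 1 = true (so 0 < 1 means false < true). *)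

Fixpoint lexle (T : eqType) (lt : rel T) (a b : seq T) : bool :=
  match a, b with
  | [::], _ => true
  | _ :: _, [::] => false
  | x :: a', y :: b' => lt x y || ((x == y) && lexle lt a' b')
  end.

Definition ltb (x y : bool) : bool := ~~ x && y.

Definition necklace_of (n : nat) (a : n.-tuple bool) : {set n.-tuple bool} :=
  [set b : n.-tuple bool | [exists k : 'I_n, val b == rot k a]].

Definition Necklaces (n s : nat) : {set {set n.-tuple bool}} :=
  [set necklace_of a | a in [set a : n.-tuple bool | count negb a == s]].

Definition min_rep (n : nat) (C : {set n.-tuple bool}) : seq bool :=
  odflt [::] (omap val [pick a in C | [forall b in C, lexle ltb (val a) (val b)]]).

(* Computed right-to-left: the state is
   (number of pending 1s, list of counts already produced). *)
Definition rle_step (b : bool) (st : nat * seq nat) : nat * seq nat :=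
  if b then (st.1.+1, st.2) else (0, st.1 :: st.2).
Definition Phi (a : seq bool) : seq nat := (foldr rle_step (0, [::]) a).2.

Definition is_IA (n s : nat) (t : seq nat) : bool :=
  (size t == s) && (sumn t == n - s).

Definition is_canonical_IA (t : seq nat) : bool :=
  all (fun k => lexle ltn t (rot k t)) (iota 0 (size t)).

Definition in_E (n s : nat) (t : seq nat) : bool := is_IA n s t && is_canonical_IA t.

Definition neck_to_IA (n : nat) (C : {set n.-tuple bool}) : seq nat := Phi (min_rep C).

(* Main.v *)
Require Import Defs.
From mathcomp Require Import all_boot.
Set Implicit Arguments. Unset Strict Implicit. Unset Printing Implicit Defensive.

Section Lex.
Variables (T : eqType) (lt : rel T).
Hypotheses (irr : irreflexive lt) (tr : transitive lt)
  (tot : forall x y, x != y -> lt x y || lt y x).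

Lemma lexle_refl a : lexle lt a a.
Proof. by elim: a => //= x a ->; rewrite eqxx orbT. Qed.

Lemma lexle_antisym a b : lexle lt a b -> lexle lt b a -> a = b.
Proof.
elim: a b => [|x a IH] [|y b] //=.
case/orP=> [lxy|/andP[/eqP-> h1]].
  case/orP=> [lyx|/andP[/eqP e _]]; first by have := irr x; rewrite (tr lxy lyx).
  by move: lxy; rewrite e irr.
case/orP=> [|/andP[_ h2]]; first by rewrite irr.
by rewrite (IH _ h1 h2).
Qed.

Lemma lexle_trans : transitive (lexle lt).
Proof.
move=> b a c; elim: a b c => [|x a IH] [|y b] [|z c] //=.
case/orP=> [lxy|/andP[/eqP-> h1]].
  case/orP=> [lyz|/andP[/eqP<- _]]; first by rewrite (tr lxy lyz).
  by rewrite lxy.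
case/orP=> [->//|/andP[/eqP-> h2]].
by rewrite eqxx (IH _ _ h1 h2) orbT.
Qed.

Lemma lexle_total : total (lexle lt).
Proof.
elim=> [|x a IH] [|y b] //=.
case: (eqVneq x y) => [->|nxy]; first by rewrite !irr /= IH.
have := tot nxy; case/orP=> ->; first by [].
by rewrite orbT.
Qed.
End Lex.

Lemma ltb_irr : irreflexive ltb. Proof. by case. Qed.
Lemma ltb_tr : transitive ltb. Proof. by do 3 case. Qed.
Lemma ltb_tot x y : x != y -> ltb x y || ltb y x. Proof. by case: x; case: y. Qed.
Lemma ltn_tot x y : x != y -> (x < y) || (y < x).
Proof. by rewrite neq_ltn. Qed.

Definition E (t : seq nat) : seq bool := flatten [seq false :: nseq x true | x <- t].

Lemma E_cons x t : E (x :: t) = false :: nseq x true ++ E t.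
Proof. by []. Qed.

Lemma E_cat t u : E (t ++ u) = E t ++ E u.
Proof. by rewrite /E map_cat flatten_cat. Qed.

Lemma foldr_nseq x st :
  foldr rle_step st (nseq x true) = (st.1 + x, st.2).
Proof. by elim: x => [|x IH] /=; [rewrite addn0; case: st | rewrite IH /rle_step /= addnS]. Qed.

Lemma foldr_E t : foldr rle_step (0, [::]) (E t) = (0, t).
Proof.
elim: t => //= x t IH; rewrite foldr_cat IH foldr_nseq /=.
by rewrite /rle_step /=.
Qed.

Lemma Phi_E t : Phi (E t) = t.
Proof. by rewrite /Phi foldr_E. Qed.

Lemma foldr_inv a : a = nseq (foldr rle_step (0, [::]) a).1 true ++ E (Phi a).
Proof.
rewrite /Phi; elim: a => //= b a IH.
case: b; rewrite /rle_step /=; first by rewrite {1}IH.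
by rewrite E_cons -IH.
Qed.

Lemma E_Phi a : head true a = false -> a = E (Phi a).
Proof.
move=> h; have := foldr_inv a; case: (foldr _ _ a).1 => // m e.
by move: h; rewrite e.
Qed.

Lemma size_E t : size (E t) = size t + sumn t.
Proof.
elim: t => //= x t IH; rewrite size_cat size_nseq IH.
by rewrite addSn addnA [x + size t]addnC addnA.
Qed.

Lemma count_E t : count negb (E t) = size t.
Proof.
elim: t => //= x t IH; rewrite count_cat IH.
have -> : count negb (nseq x true) = 0 by elim: x.
by [].
Qed.

Lemma lex_nseq x y A B :
  (A = [::] \/ head true A = false) -> (B = [::] \/ head true B = false) ->
  lexle ltb (nseq x true ++ A) (nseq y true ++ B) =
  (x < y) || ((x == y) && lexle ltb A B).
Proof.
move=> hA hB; elim: x y => [|x IH] [|y] //=.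
- by case: hA => [->//|]; case: A => //= a A ->.
- by clear IH; case: hB => [->//|]; case: B => //= b B ->.
Qed.

Lemma E_shape t : E t = [::] \/ head true (E t) = false.
Proof. by case: t; [left|right]. Qed.

Set Printing Width 200.
Lemma lex_E t u : lexle ltb (E t) (E u) = lexle ltn t u.
Proof.
elim: t u => [|x t IH] [|y u] //=.
rewrite (lex_nseq _ _ (E_shape t) (E_shape u)). by rewrite -IH.
Qed.

Lemma E_pos t j : nth true (E t) j = false ->
  exists2 k, k < size t & j = size (E (take k t)).
Proof.
elim: t j => [|x t IH] j; first by rewrite nth_nil.
case: j => [_|j]; first by exists 0.
rewrite /= nth_cat size_nseq; case: ifP => [lt|].
  by rewrite nth_nseq lt.
move/negbT; rewrite -leqNgt => le h.
have [k lk ej] := IH _ h.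
exists k.+1 => //=.
by rewrite size_cat size_nseq -ej subnKC.
Qed.

Lemma rot_E t k : rot (size (E (take k t))) (E t) = E (rot k t).
Proof.
by rewrite -{2}(cat_take_drop k t) E_cat rot_size_cat /rot E_cat.
Qed.

Lemma rot_E_false t j : head true (rot j (E t)) = false ->
  exists2 k, k < size t & rot j (E t) = E (rot k t).
Proof.
case: (ltnP j (size (E t))) => [lj|lj]; last first.
  rewrite rot_oversize //; case: t lj => // x t _ _; exists 0 => //; by rewrite rot0.
rewrite {1}/rot; case e: (drop j (E t)) => [|b r]; first by move: (f_equal size e); rewrite size_drop /= => /eqP; rewrite subn_eq0 leqNgt lj.
move=> /= hb; have := nth_drop j true (E t) 0.
rewrite addn0 e /= hb => /esym/E_pos [k lk ej]; exists k => //.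
by rewrite -rot_E -ej /rot e.
Qed.

Lemma rot_comp (T : Type) (a : seq T) j k : exists i, rot j (rot k a) = rot i a.
Proof.
case: (leqP (size a) k) => hk; first by rewrite (rot_oversize hk); exists j.
case: (leqP (size a) j) => hj.
  by rewrite (rot_oversize (n:=j)) ?size_rot //; exists k.
by rewrite rot_add_mod ?(ltnW hk) ?(ltnW hj); eexists.
Qed.

Lemma rot_inv (T : Type) (a : seq T) k : exists i, a = rot i (rot k a).
Proof. by exists (size (rot k a) - k); rewrite -/(rotr k (rot k a)) rotK. Qed.

Lemma mem_neck n (a b : n.-tuple bool) : 0 < n ->
  (b \in necklace_of a) <-> exists k, val b = rot k a.
Proof.
move=> n0; rewrite inE; split.
  by case/existsP => k /eqP ->; exists k.
case=> k e; apply/existsP.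
case: (ltnP k n) => hk; first by exists (Ordinal hk); rewrite e.
exists (Ordinal n0); rewrite e /= rot0 rot_oversize //.
by rewrite size_tuple.
Qed.

Lemma neck_eq n (a b : n.-tuple bool) : 0 < n ->
  b \in necklace_of a -> necklace_of b = necklace_of a.
Proof.
move=> n0 /(mem_neck _ _ n0) [k e]; apply/setP => c.
apply/idP/idP => /(mem_neck _ _ n0) [j ej]; apply/(mem_neck _ _ n0).
  by have [i ei] := rot_comp a j k; exists i; rewrite ej e.
have [i ei] := rot_inv a k.
have [l el] := rot_comp (rot k a) j i.
by exists l; rewrite ej e -el -ei.
Qed.

Definition R n (x y : n.-tuple bool) := lexle ltb (val x) (val y).

Lemma min_spec n (C : {set n.-tuple bool}) (x : n.-tuple bool) : x \in C ->
  exists m, [/\ m \in C, forall b, b \in C -> R m b & min_rep C = val m].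
Proof.
move=> xC.
have tot : total (@R n) by move=> u v; exact: (lexle_total ltb_irr ltb_tot).
have trR : transitive (@R n) by move=> u v w; exact: (lexle_trans ltb_tr).
have ex : exists m, (m \in C) && [forall b in C, R m b].
  move: (sort_sorted tot (enum C)) (mem_sort (@R n) (enum C)).
  case e: (sort _ _) => [|m l].
    by move=> _ /(_ x); rewrite mem_enum xC.
  move=> /= p mm; exists m; rewrite -mem_enum -mm mem_head /=.
  apply/forallP => b; apply/implyP => bC.
  have : b \in m :: l by rewrite mm mem_enum.
  rewrite inE => /orP [/eqP ->|bl]; first exact: lexle_refl.
  by have /allP := order_path_min trR p; apply.
rewrite /min_rep; case: pickP => [m /andP [mC /forallP h]|none].
  exists m; split => // b bC; exact: (implyP (h b)).
by case: ex => m; rewrite none.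
Qed.

Lemma head_rot (T : Type) (x0 : T) s j : j < size s -> head x0 (rot j s) = nth x0 s j.
Proof.
move=> hj; rewrite -nth0 /rot nth_cat size_drop subn_gt0 hj nth_drop addn0 //.
Qed.

Lemma min_E n (a : n.-tuple bool) : 0 < count negb a ->
  exists m, [/\ m \in necklace_of a, forall b, b \in necklace_of a -> R m b,
     min_rep (necklace_of a) = val m & val m = E (Phi (val m))].
Proof.
move=> hc.
have n0 : 0 < n by rewrite -(size_tuple a); apply: leq_trans hc (count_size _ _).
have aC : a \in necklace_of a by apply/mem_neck => //; exists 0; rewrite rot0.
have [m [mC mmin mrep]] := min_spec aC.
exists m; split => //.
apply: E_Phi.
have fa : false \in (val a) by move: hc; rewrite -has_count => /hasP [[] //].
pose j := index false a.
have hj : j < size a by rewrite index_mem.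
have bC : [tuple of rot j a] \in necklace_of a by apply/mem_neck => //; exists j.
have := mmin _ bC; rewrite /R /=.
have : head true (rot j a) = false by rewrite head_rot // nth_index.
case: (rot j a) => // _ r /= ->.
case: m {mC mmin mrep} => [[|c l] /= sz]; first by move: sz n0; rewrite /= => /eqP <-.
by case: c.
Qed.

Theorem proposition11 (n s : nat) (hs1 : 1 <= s) (hsn : s <= n) :
  [/\ {in Necklaces n s, forall C, in_E n s (neck_to_IA C)},
      {in Necklaces n s &, injective (@neck_to_IA n)} &
      forall t : seq nat, in_E n s t ->
        exists2 C, C \in Necklaces n s & neck_to_IA C = t].
Proof.
have n0 : 0 < n by apply: leq_trans hsn.
split.
- move=> C /imsetP [a]; rewrite inE => /eqP ca ->.
  have hc : 0 < count negb a by rewrite ca.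
  have [m [mC mmin mrep mE]] := min_E hc.
  rewrite /neck_to_IA mrep; set t := Phi (val m).
  have [k ek] := (mem_neck _ _ n0).1 mC.
  have st : size t = s.
    rewrite -count_E -/t -mE ek -ca.
    have p : perm_eq (rot k a) a by rewrite perm_rot.
    exact: (permP p).
  apply/andP; split.
    apply/andP; split; first by rewrite st.
    have := size_tuple m; rewrite mE size_E -/t st => <-.
    by rewrite addKn.
  apply/allP => k'; rewrite mem_iota add0n => /andP [_ hk'].
  rewrite -lex_E -rot_E -mE.
  set j := size _.
  have bC : [tuple of rot j m] \in necklace_of a.
    apply/mem_neck => //=; rewrite ek.
    by have [i ei] := rot_comp a j k; exists i.
  exact: (mmin _ bC).
- move=> C1 C2 /imsetP [a1]; rewrite inE => /eqP c1 -> /imsetP [a2]; rewrite inE => /eqP c2 ->.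
  have h1 : 0 < count negb a1 by rewrite c1.
  have [m1 [m1C _ r1 e1]] := min_E h1.
  have h2 : 0 < count negb a2 by rewrite c2.
  have [m2 [m2C _ r2 e2]] := min_E h2.
  rewrite /neck_to_IA r1 r2 => ePhi.
  have em : m1 = m2 by apply: val_inj; rewrite e1 e2 ePhi.
  by rewrite -(neck_eq n0 m1C) -(neck_eq n0 m2C) em.
- move=> t /andP [/andP [/eqP st /eqP sumt] can].
  have sz : size (E t) == n by rewrite size_E st sumt subnKC.
  pose at_ : n.-tuple bool := Tuple sz.
  have hc : 0 < count negb at_ by rewrite /= count_E st.
  exists (necklace_of at_).
    by apply/imsetP; exists at_ => //; rewrite inE /= count_E st.
  have [m [mC mmin mrep mE]] := min_E hc.
  have [k ek] := (mem_neck _ _ n0).1 mC.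
  have hd : head true (rot k (E t)) = false.
    rewrite -[rot k _]/(rot k at_) -ek mE.
    have sm : size (E (Phi (val m))) = n by rewrite -mE size_tuple.
    by case: (Phi (val m)) sm => [/= e|//]; move: n0; rewrite -e.
  have [k' hk' ek'] := rot_E_false hd.
  have at_C : at_ \in necklace_of at_ by apply/mem_neck => //; exists 0; rewrite rot0.
  have le1 := mmin _ at_C; rewrite /R ek /= ek' lex_E in le1.
  have le2 : lexle ltn t (rot k' t).
    by apply: (allP can); rewrite mem_iota add0n.
  rewrite /neck_to_IA mrep ek /= ek' Phi_E.
  exact: (lexle_antisym (@ltnn) ltn_trans le1 le2).
Qed.
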